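(* If $G$ is a very well-covered graph of girth at least $5$, then $\Psi(G)$ is a greedoid on $V(G)$.
   Context: All graphs are finite, simple, undirected. For $A\subseteq V(G)$, $N(A)=\{v\in V(G)-A: N(v)\cap A\neq\emptyset\}$ and $N[A]=A\cup N(A)$; $G[X]$ is the subgraph induced by $X$. A stable set is a set of pairwise non-adjacent vertices; $\alpha(G)$ is the maximum size of a stable set. $G$ is well-covered if all its maximal stable sets have the same cardinality, and very well-covered if it is well-covered, has no isolated vertices, and $|V(G)|=2\alpha(G)$. A set $A\subseteq V(G)$ is a local maximum stable set of $G$ if $A$ is a maximum stable set of $G[N[A]]$; $\Psi(G)$ denotes the family of all local maximum stable sets of $G$. A greedoid on a finite set $V$ is a non-empty family $\mathcal{F}\subseteq 2^V$ such that (Accessibility) every non-empty $X\in\mathcal{F}$ has an element $x\in X$ with $X-\{x\}\in\mathcal{F}$, and (Exchange) for all $X,Y\in\mathcal{F}$ with $|X|=|Y|+1$ there is $x\in X-Y$ with $Y\cup\{x\}\in\mathcal{F}$. *)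

(* Defs.v *)
(* A finite simple graph is a symmetric irreflexive relation
   e on a finite vertex type T; V(G) = [set: T]. *)
From mathcomp Require Import all_boot.
Set Implicit Arguments. Unset Strict Implicit. Unset Printing Implicit Defensive.

Section Graph.
Variable T : finType.
Variable e : rel T.

Definition simple_graph : Prop := symmetric e /\ irreflexive e.

Definition nbhd (A : {set T}) : {set T} :=
  [set v | (v \notin A) && [exists a in A, e v a]].
Definition cnbhd (A : {set T}) : {set T} := A :|: nbhd A.

Definition stable (S : {set T}) : bool :=
  [forall x in S, forall y in S, ~~ e x y].

Definition alpha : nat := \max_(S : {set T} | stable S) #|S|.

Definition maximal_stable (S : {set T}) : bool :=
  stable S && [forall v, (v \notin S) ==> ~~ stable (v |: S)].

Definition well_covered : Prop :=
  forall S1 S2 : {set T}, maximal_stable S1 -> maximal_stable S2 -> #|S1| = #|S2|.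

Definition no_isolated : Prop := forall v : T, exists u : T, e v u.

Definition very_well_covered : Prop :=
  well_covered /\ no_isolated /\ #|T| = 2 * alpha.

Definition girth_ge5 : Prop :=
  (forall a b c : T, ~ (e a b /\ e b c /\ e c a)) /\
  (forall a b c d : T, a != c -> b != d -> ~ (e a b /\ e b c /\ e c d /\ e d a)).

Definition max_stable_in (X A : {set T}) : bool :=
  [&& A \subset X, stable A &
      [forall B : {set T}, (B \subset X) && stable B ==> (#|B| <= #|A|)]].

Definition local_max_stable (A : {set T}) : bool := max_stable_in (cnbhd A) A.

Definition Psi : {set {set T}} := [set A | local_max_stable A].

End Graph.

Definition greedoid (T : finType) (F : {set {set T}}) : Prop :=
  F != set0 /\
  (forall X, X \in F -> X != set0 -> exists2 x, x \in X & X :\ x \in F) /\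
  (forall X Y, X \in F -> Y \in F -> #|X| = #|Y|.+1 ->
     exists2 x, x \in X :\: Y & x |: Y \in F).

(* Main.v *)
Require Import Defs.
From mathcomp Require Import all_boot.
From Stdlib Require Import Classical.
Set Implicit Arguments. Unset Strict Implicit. Unset Printing Implicit Defensive.

Section S.
Variable T : finType.
Variable e : rel T.
Hypothesis esym : symmetric e.
Hypothesis eirr : irreflexive e.

Lemma stableP (S : {set T}) :
  reflect (forall x y, x \in S -> y \in S -> ~~ e x y) (stable e S).
Proof.
apply: (iffP forall_inP) => H.
- by move=> x y xS yS; exact: (forall_inP (H x xS)) y yS.
- by move=> x xS; apply/forall_inP => y yS; exact: H.
Qed.

Lemma stableS (A B : {set T}) : A \subset B -> stable e B -> stable e A.
Proof.
move=> sAB /stableP H; apply/stableP => x y xA yA.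
by apply: H; apply: (subsetP sAB).
Qed.

Definition maxin (U S : {set T}) : bool :=
  [&& S \subset U, stable e S &
      [forall v in U, (v \notin S) ==> ~~ stable e (v |: S)]].

Definition wcU (U : {set T}) (a : nat) : Prop :=
  forall S, maxin U S -> #|S| = a.

Definition noisoU (U : {set T}) : Prop :=
  forall v, v \in U -> exists2 u, u \in U & e v u.

Lemma extend_aux (U : {set T}) n : forall S, #|U :\: S| <= n -> S \subset U ->
  stable e S -> exists2 S' : {set T}, S \subset S' & maxin U S'.
Proof.
elim: n => [|n IH] S hc sSU stS.
  exists S => //; apply/and3P; split => //.
  apply/forall_inP => v vU; apply/implyP => vS.
  have : v \in U :\: S by rewrite inE vS vU.
  by move: hc; rewrite leqn0 cards_eq0 => /eqP ->; rewrite inE.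
case: (boolP [forall v in U, (v \notin S) ==> ~~ stable e (v |: S)]) => H.
  by exists S => //; apply/and3P.
move/forall_inPn: H => [v vU]; rewrite negb_imply negbK => /andP [vS stv].
have [S' sub mx] : exists2 S' : {set T}, v |: S \subset S' & maxin U S'.
  apply: IH => //.
    have hv : v \in U :\: S by rewrite inE vS vU.
    move: hc; rewrite (cardsD1 v (U :\: S)) hv add1n ltnS.
    by apply: leq_trans; apply: subset_leq_card; apply/subsetP => x;
      rewrite !inE negb_or; by case/andP => /andP[-> ->] ->.
  by rewrite subUset sub1set vU sSU.
by exists S' => //; apply: subset_trans sub; apply: subsetUr.
Qed.

Lemma extend (U S : {set T}) : S \subset U -> stable e S ->
  exists2 S' : {set T}, S \subset S' & maxin U S'.
Proof. exact: (@extend_aux U #|U :\: S| S (leqnn _)). Qed.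

Lemma stable_le (U : {set T}) a (S : {set T}) : wcU U a -> S \subset U -> stable e S -> #|S| <= a.
Proof.
move=> wc sSU stS; have [S' sub mx] := extend sSU stS.
by rewrite -(wc _ mx); apply: subset_leq_card.
Qed.

Lemma stableU1 v (S : {set T}) : stable e S -> (forall y, y \in S -> ~~ e v y) ->
  stable e (v |: S).
Proof.
move=> /stableP st H; apply/stableP => x y; rewrite !inE.
case/orP => [/eqP -> | xS]; case/orP => [/eqP -> | yS].
- by rewrite eirr.
- exact: H.
- by rewrite esym; exact: H.
- exact: st.
Qed.

Lemma maxin_sub (U S : {set T}) : maxin U S -> S \subset U.
Proof. by case/and3P. Qed.
Lemma maxin_st (U S : {set T}) : maxin U S -> stable e S.
Proof. by case/and3P. Qed.
Lemma maxin_max (U S : {set T}) v : maxin U S -> v \in U -> v \notin S -> ~~ stable e (v |: S).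
Proof. by case/and3P => _ _ /forall_inP H vU vS; move/implyP: (H v vU); apply. Qed.

Lemma maxinI (U S : {set T}) : S \subset U -> stable e S ->
  (forall v, v \in U -> v \notin S -> ~~ stable e (v |: S)) -> maxin U S.
Proof.
move=> s st H; apply/and3P; split => //; apply/forall_inP => v vU.
by apply/implyP; apply: H.
Qed.

Lemma R2 (U : {set T}) a u l1 l2 : wcU U a -> u \in U -> l1 \in U -> l2 \in U -> l1 != l2 ->
  e l1 u -> e l2 u -> (forall y, y \in U -> e l1 y -> y = u) ->
  (forall y, y \in U -> e l2 y -> y = u) -> False.
Proof.
move=> wc uU l1U l2U n12 e1 e2 H1 H2.
have st1 : stable e [set u].
  by apply/stableP => x y; rewrite !inE => /eqP -> /eqP ->; rewrite eirr.
have [I sub mx] : exists2 I : {set T}, [set u] \subset I & maxin U I.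
  by apply: extend; rewrite ?sub1set.
have uI : u \in I by apply: (subsetP sub); rewrite inE.
have l1I : l1 \notin I.
  by apply/negP => l1I; move/stableP: (maxin_st mx) => /(_ _ _ l1I uI); rewrite e1.
have l2I : l2 \notin I.
  by apply/negP => l2I; move/stableP: (maxin_st mx) => /(_ _ _ l2I uI); rewrite e2.
have stI' : stable e (I :\ u) by apply: (stableS _ (maxin_st mx)); apply: subD1set.
have st2 : stable e (l2 |: (I :\ u)).
  apply: stableU1 => // y; rewrite !inE => /andP [yu yI]; apply/negP => E.
  have yU : y \in U by apply: (subsetP (maxin_sub mx)).
  by move: yu; rewrite (H2 y yU E) eqxx.
have st3 : stable e (l1 |: (l2 |: (I :\ u))).
  apply: stableU1 => // y; rewrite !inE => /orP [/eqP -> | /andP [yu yI]];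
    apply/negP => E.
    by move: e2; rewrite (H1 _ l2U E) eirr.
  have yU : y \in U by apply: (subsetP (maxin_sub mx)).
  by move: yu; rewrite (H1 y yU E) eqxx.
have : #|l1 |: (l2 |: (I :\ u))| <= a.
  apply: stable_le wc _ st3.
  rewrite !subUset !sub1set l1U l2U /=; apply: subset_trans (maxin_sub mx).
  exact: subD1set.
rewrite -(wc _ mx) cardsU1 cardsU1 !inE (negbTE n12) (negbTE l1I) (negbTE l2I).
by rewrite !andbF /= (cardsD1 u I) uI add1n add1n ltnn.
Qed.

Hypothesis girth : girth_ge5 e.

Lemma stable0 : stable e set0.
Proof. by apply/stableP => x y; rewrite inE. Qed.

Lemma notstable_grow (S S' : {set T}) : S \subset S' -> ~~ stable e S -> ~~ stable e S'.
Proof. by move=> sub; apply: contra; apply: stableS. Qed.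

Lemma notstable_pair (S : {set T}) x y : x \in S -> y \in S -> e x y -> ~~ stable e S.
Proof. by move=> xS yS exy; apply/negP => /stableP /(_ _ _ xS yS); rewrite exy. Qed.

Lemma main n : forall (U : {set T}) a, #|U| <= n -> wcU U a -> noisoU U ->
  2 * a <= #|U| /\ (2 * a = #|U| -> exists m : T -> T, forall v, v \in U ->
     [/\ m v \in U, e v (m v) & m (m v) = v]).
Proof.
elim: n => [|n IH] U a hU wc ni.
  have U0 : U = set0 by apply/eqP; rewrite -cards_eq0 -leqn0.
  have a0 : a = 0.
    rewrite -(wc set0) ?cards0 //; apply: maxinI; rewrite ?sub0set ?stable0 //.
    by move=> v; rewrite U0 inE.
  by rewrite a0 U0 cards0; split => // _; exists id => v; rewrite inE.
case: (eqVneq U set0) => [U0|/set0Pn [v0 v0U]].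
  have a0 : a = 0.
    rewrite -(wc set0) ?cards0 //; apply: maxinI; rewrite ?sub0set ?stable0 //.
    by move=> v; rewrite U0 inE.
  by rewrite a0 U0 cards0; split => // _; exists id => v; rewrite inE.
case: (classic (exists v u, [/\ v \in U, u \in U, e v u &
         forall y, y \in U -> e v y -> y = u])) => [[v [u [vU uU evu Hl]]]|NL].
-
  have vu : v != u by apply/eqP => E; move: evu; rewrite E eirr.
  set U' := U :\ v :\ u.
  have sU' : U' \subset U by rewrite /U'; apply: subset_trans (subD1set _ _) (subD1set _ _).
  have vU' : v \notin U' by rewrite !inE eqxx andbF.
  have uU' : u \notin U' by rewrite !inE eqxx.
  have cardU : #|U| = #|U'|.+2.
    rewrite (cardsD1 v U) vU (cardsD1 u (U :\ v)) !inE eq_sym vu uU.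
    by rewrite add1n add1n.
  have key : forall S, maxin U' S -> maxin U (v |: S).
    move=> S mx; have sS := subset_trans (maxin_sub mx) sU'.
    apply: maxinI.
    + by rewrite subUset sub1set vU sS.
    + apply: stableU1 => [|y yS]; first exact: maxin_st mx.
      apply/negP => evy; have yU : y \in U by apply: (subsetP sS).
      move: (Hl y yU evy) => E; move: (subsetP (maxin_sub mx) y yS).
      by rewrite E (negbTE uU').
    + move=> w wU; rewrite !inE negb_or => /andP [wv wS].
      case: (eqVneq w u) => [->|wu].
        by apply: (notstable_pair (x:=u) (y:=v)); rewrite ?inE ?eqxx ?orbT // esym.
      apply: (notstable_grow (S := w |: S)).
        by apply: setUS; apply: subsetUr.
      by apply: (maxin_max mx) => //; rewrite !inE wu wv wU.
  have [S0 _ mx0] : exists2 S0 : {set T}, set0 \subset S0 & maxin U' S0.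
    by apply: extend; rewrite ?sub0set ?stable0.
  have notin S : maxin U' S -> v \notin S.
    by move=> mx; apply: contra vU'; apply: (subsetP (maxin_sub mx)).
  have ha : a = #|S0|.+1 by rewrite -(wc _ (key _ mx0)) cardsU1 notin.
  have wc' : wcU U' #|S0|.
    move=> S mx; have := wc _ (key _ mx); rewrite ha cardsU1 notin //.
    by rewrite add1n; case.
  have ni' : noisoU U'.
    move=> w wU'; have wU : w \in U by apply: (subsetP sU').
    apply: NNPP => H.
    have Hw : forall y, y \in U -> e w y -> y = u.
      move=> y yU ewy; apply/eqP; apply: contraT => yu.
      case: (eqVneq y v) => [yv|yv].
        have := Hl w wU; rewrite esym -yv => /(_ ewy) wu.
        by move: wU'; rewrite wu (negbTE uU').
      by exfalso; apply: H; exists y => //; rewrite !inE yu yv yU.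
    have [y yU ewy] := ni w wU.
    apply: (R2 wc uU vU wU _ evu _ Hl Hw).
      by apply: contra vU' => /eqP ->.
    by rewrite -(Hw y yU ewy).
  have hU' : #|U'| <= n by move: hU; rewrite cardU ltnS => /ltnW.
  have [le eqm] := IH U' #|S0| hU' wc' ni'.
  split.
    by rewrite ha cardU mulnS add2n !ltnS.
  move=> E; have [m' Hm'] : exists m' : T -> T, forall v, v \in U' ->
     [/\ m' v \in U', e v (m' v) & m' (m' v) = v].
    by apply: eqm; move: E; rewrite ha cardU mulnS add2n; case.
  exists (fun w => if w == v then u else if w == u then v else m' w).
  move=> w wU; case: (eqVneq w v) => [->|wv].
    by rewrite eqxx eq_sym (negbTE vu).
  case: (eqVneq w u) => [->|wu].
    rewrite eqxx; split => //; by rewrite esym.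
  have wU' : w \in U' by rewrite !inE wu wv wU.
  have [m1 m2 m3] := Hm' w wU'.
  have mv : m' w != v by apply: contra vU' => /eqP <-.
  have mu : m' w != u by apply: contra uU' => /eqP <-.
  rewrite (negbTE mv) (negbTE mu) m3; split => //.
  exact: (subsetP sU').
-
  have notleaf : forall w u, w \in U -> u \in U -> e w u ->
      exists u2, [/\ u2 \in U, e w u2 & u2 != u].
    move=> w u wU uU ewu; apply: NNPP => H; apply: NL; exists w, u; split => //.
    move=> y yU ewy; apply/eqP; apply: contraT => yu.
    by exfalso; apply: H; exists y.
  set v := v0.
  have [u1 u1U evu1] := ni v v0U.
  have [u2 [u2U evu2 u21]] := notleaf v u1 v0U u1U evu1.
  set U' := [set w in U | (w != v) && ~~ e w v].
  have sU' : U' \subset U by apply/subsetP => w; rewrite inE => /andP [].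
  have vU' : v \notin U' by rewrite inE eqxx andbF.
  have key : forall S, maxin U' S -> maxin U (v |: S).
    move=> S mx; have sS := subset_trans (maxin_sub mx) sU'.
    apply: maxinI.
    + by rewrite subUset sub1set v0U sS.
    + apply: stableU1 => [|y yS]; first exact: maxin_st mx.
      move: (subsetP (maxin_sub mx) y yS); rewrite inE esym.
      by case/and3P.
    + move=> w wU; rewrite !inE negb_or => /andP [wv wS].
      case: (boolP (e w v)) => ewv.
        by apply: (notstable_pair (x:=w) (y:=v)); rewrite ?inE ?eqxx ?orbT.
      apply: (notstable_grow (S := w |: S)).
        by apply: setUS; apply: subsetUr.
      by apply: (maxin_max mx) => //; rewrite !inE wv ewv wU.
  have [S0 _ mx0] : exists2 S0 : {set T}, set0 \subset S0 & maxin U' S0.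
    by apply: extend; rewrite ?sub0set ?stable0.
  have notin S : maxin U' S -> v \notin S.
    by move=> mx; apply: contra vU'; apply: (subsetP (maxin_sub mx)).
  have ha : a = #|S0|.+1 by rewrite -(wc _ (key _ mx0)) cardsU1 notin.
  have wc' : wcU U' #|S0|.
    move=> S mx; have := wc _ (key _ mx); rewrite ha cardsU1 notin //.
    by rewrite add1n; case.
  have ni' : noisoU U'.
    move=> w wU'; have wU : w \in U by apply: (subsetP sU').
    move: (wU'); rewrite inE wU /= => /andP [wv newv].
    apply: NNPP => H.
    have Hw : forall y, y \in U -> e w y -> e y v.
      move=> y yU ewy; apply: contraT => nyv.
      case: (eqVneq y v) => [yv|yv].
        by move: newv; rewrite -yv ewy.
      by exfalso; apply: H; exists y => //; rewrite !inE yv nyv yU.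
    have [y1 y1U ewy1] := ni w wU.
    have [y2 [y2U ewy2 y21]] := notleaf w y1 wU y1U ewy1.
    case: girth => _ /(_ v y1 w y2); apply.
    + by rewrite eq_sym.
    + by rewrite eq_sym.
    + split; first by rewrite esym; apply: Hw.
      split; first by rewrite esym.
      by split => //; apply: Hw.
  have v1 : u1 != v by apply/eqP => E; move: evu1; rewrite E eirr.
  have v2 : u2 != v by apply/eqP => E; move: evu2; rewrite E eirr.
  have cardU : #|U'|.+3 <= #|U|.
    rewrite (cardsD1 v U) v0U (cardsD1 u1 (U :\ v)) !inE v1 u1U.
    rewrite (cardsD1 u2 (U :\ v :\ u1)) !inE u21 v2 u2U !add1n !ltnS.
    apply: subset_leq_card; apply/subsetP => w; rewrite !inE => /and3P [wU wv nwv].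
    rewrite wv wU !andbT; apply/andP; split; apply: contra nwv => /eqP ->;
      by rewrite esym.
  have hU' : #|U'| <= n.
    have h := leq_trans cardU hU; rewrite ltnS in h.
    by apply: leq_trans h; rewrite -addn2 leq_addr.
  have [le _] := IH U' #|S0| hU' wc' ni'.
  have lt : 2 * a < #|U|.
    by rewrite ha mulnS add2n; apply: leq_trans cardU; rewrite !ltnS.
  split; first exact: ltnW.
  by move=> E; move: lt; rewrite E ltnn.
Qed.

Variable m : T -> T.
Hypothesis mE : forall v, e v (m v).
Hypothesis mK : forall v, m (m v) = v.
Definition lf v := [forall u, e v u ==> (u == m v)].
Hypothesis mleaf : forall v, lf v || lf (m v).

Lemma lfP v u : lf v -> e v u -> u = m v.
Proof. by move/forallP/(_ u)/implyP => H /H /eqP. Qed.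

Lemma cnbhdP w (A : {set T}) :
  reflect (w \in A \/ exists2 a, a \in A & e w a) (w \in cnbhd e A).
Proof.
rewrite /cnbhd /nbhd !inE; case: (boolP (w \in A)) => wA /=.
  by apply: ReflectT; left.
apply: (iffP existsP).
  by move=> [a /andP [aA ewa]]; right; exists a.
by case => // [[a aA ewa]]; exists a; rewrite aA.
Qed.

Lemma cnbhd_self w (A : {set T}) : w \in A -> w \in cnbhd e A.
Proof. by move=> wA; apply/cnbhdP; left. Qed.
Lemma cnbhd_adj w a (A : {set T}) : a \in A -> e w a -> w \in cnbhd e A.
Proof. by move=> aA ewa; apply/cnbhdP; right; exists a. Qed.

Lemma cnbhd_mono (A B : {set T}) w : A \subset B -> w \in cnbhd e A -> w \in cnbhd e B.
Proof.
move=> sAB /cnbhdP [wA|[a aA ewa]].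
  by apply: cnbhd_self; apply: (subsetP sAB).
by apply: (cnbhd_adj (a:=a)) => //; apply: (subsetP sAB).
Qed.

Definition closed (A : {set T}) : Prop :=
  stable e A /\ forall x, x \in cnbhd e A -> m x \in cnbhd e A.

Lemma stab (A : {set T}) x y : stable e A -> x \in A -> y \in A -> e x y -> False.
Proof. by move=> /stableP H xA yA exy; move: (H x y xA yA); rewrite exy. Qed.

Lemma lemK (X : {set T}) w a : closed X -> w \notin X -> a \in X -> e w a -> m w \in X.
Proof.
move=> [stX clX] wX aX ewa.
have : m w \in cnbhd e X by apply: clX; apply: (cnbhd_adj aX).
case/cnbhdP => // [[b bX emb]].
case/orP: (mleaf w) => H.
  by rewrite -(lfP H ewa).
by move: wX; rewrite -{1}(mK w) -(lfP H emb) bX.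
Qed.

Lemma card_bound (A B : {set T}) : closed A -> stable e B ->
  #|B :&: cnbhd e A| <= #|A|.
Proof.
move=> clA stB.
pose f b := if b \in A then b else m b.
have fA : forall b, b \in B :&: cnbhd e A -> f b \in A.
  move=> b; rewrite inE => /andP [_ /cnbhdP [bA|[a aA eba]]]; rewrite /f.
    by rewrite bA.
  case: ifP => // /negbT bA; exact: (lemK clA bA aA eba).
have inj : {in B :&: cnbhd e A &, injective f}.
  move=> b1 b2; rewrite !inE => /andP [b1B _] /andP [b2B _]; rewrite /f.
  case: ifP => b1A; case: ifP => b2A.
  - by [].
  - move=> E; exfalso; apply: (stab stB b2B b1B); rewrite E; exact: mE.
  - move=> E; exfalso; apply: (stab stB b1B b2B); rewrite -E; exact: mE.
  - by move=> E; rewrite -(mK b1) E mK.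
rewrite -(card_in_imset inj); apply: subset_leq_card; apply/subsetP => z.
by case/imsetP => b bD ->; apply: fA.
Qed.

Lemma closed_psi (A : {set T}) : closed A -> A \in Psi e.
Proof.
move=> clA; rewrite inE /local_max_stable /max_stable_in; apply/and3P; split.
- by apply/subsetP => w; apply: cnbhd_self.
- by case: clA.
- apply/forallP => B; apply/implyP => /andP [sB stB].
  by rewrite -(setIidPl sB); apply: card_bound.
Qed.

Lemma psi_closed (A : {set T}) : A \in Psi e -> closed A.
Proof.
rewrite inE /local_max_stable /max_stable_in => /and3P [_ stA /forallP HB].
split => // x xN; case: (boolP (m x \in cnbhd e A)) => // /negP mxN; exfalso.
have mxA : m x \notin A by apply/negP => mA; apply: mxN; apply: cnbhd_self.
case/cnbhdP: xN => [xA|[a0 a0A exa0]].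
  by apply: mxN; apply: (cnbhd_adj xA); rewrite esym.
have xA : x \notin A.
  by apply/negP => xA; apply: mxN; apply: (cnbhd_adj xA); rewrite esym.
have lmx : lf (m x).
  case/orP: (mleaf x) => // H; by move: mxA; rewrite -(lfP H exa0) a0A.
set N := [set y | e x y].
set A1 := A :&: N.
set A2 := A :\: N.
have lA1 : forall a, a \in A1 -> lf (m a).
  move=> a; rewrite !inE => /andP [aA exa].
  have eax : e a x by rewrite esym.
  case/orP: (mleaf a) => // H.
  by move: mxA; rewrite (lfP H eax) mK aA.
have A1A : forall a, a \in A1 -> a \in A by move=> a; rewrite inE => /andP [].
have mA : forall a, a \in A -> m a \notin A.
  by move=> a aA; apply/negP => maA; apply: (stab stA aA maA); apply: mE.
set B := x |: (A2 :|: [set m a | a in A1]).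
have xnot : x \notin A2 :|: [set m a | a in A1].
  rewrite inE negb_or; apply/andP; split.
    by rewrite inE negb_and xA orbT.
  apply/negP => /imsetP [a aA1 E]; move: mxA; rewrite E mK.
  by rewrite (A1A _ aA1).
have dis : A2 :&: [set m a | a in A1] = set0.
  apply/setP => z; rewrite !inE; apply/negP => /andP [/andP [_ zA] /imsetP [a aA1 E]].
  by move: (mA a (A1A _ aA1)); rewrite -E zA.
have cardB : #|B| = #|A|.+1.
  rewrite /B cardsU1 xnot add1n; congr S.
  have := cardsUI A2 [set m a | a in A1]; rewrite dis cards0 addn0 => ->.
  rewrite card_imset; last by apply: (can_inj mK).
  by rewrite addnC cardsID.
have subB : B \subset cnbhd e A.
  apply/subsetP => z /setU1P [->|/setUP [|/imsetP [a aA1 ->]]].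
  - exact: (cnbhd_adj a0A exa0).
  - by rewrite inE => /andP [_ zA]; apply: cnbhd_self.
  - by apply: (cnbhd_adj (A1A _ aA1)); rewrite esym.
have stB : stable e B.
  apply: stableU1.
    apply/stableP => y z /setUP [yA2|/imsetP [a aA1 ->]];
      move=> /setUP [zA2|/imsetP [b bA1 ->]].
    - move: yA2 zA2; rewrite !inE => /andP [_ yA] /andP [_ zA].
      by apply/negP => eyz; apply: (stab stA yA zA eyz).
    - move: yA2; rewrite !inE => /andP [nxy _].
      apply/negP => eyz.
      have eby : e (m b) y by rewrite esym.
      have E := lfP (lA1 _ bA1) eby; rewrite mK in E.
      by move: bA1; rewrite !inE -E (negbTE nxy) andbF.
    - move: zA2; rewrite !inE => /andP [nxz _].
      apply/negP => eyz.
      have E := lfP (lA1 _ aA1) eyz; rewrite mK in E.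
      by move: aA1; rewrite !inE -E (negbTE nxz) andbF.
    - apply/negP => eab; have E := lfP (lA1 _ aA1) eab; rewrite mK in E.
      by move: (mA b (A1A _ bA1)); rewrite E (A1A _ aA1).
  move=> y /setUP [|/imsetP [a aA1 ->]].
    by rewrite !inE => /andP [nxy _].
  apply/negP => exa.
  have eax : e (m a) x by rewrite esym.
  have E := lfP (lA1 _ aA1) eax; rewrite mK in E.
  by move: xA; rewrite E (A1A _ aA1).
move/implyP: (HB B); rewrite subB stB cardB ltnn => /(_ isT).
by [].
Qed.

Lemma closed_del (X : {set T}) x : closed X -> x \in X ->
  (~~ lf x \/ forall y, y \in X -> lf y) -> closed (X :\ x).
Proof.
move=> clX xX Hx; have [stX _] := clX; split.
  by apply: (stableS _ stX); apply: subD1set.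
move=> w wN; case: (boolP (w \in X :\ x)) => wA.
  by apply: (cnbhd_adj wA); rewrite esym.
case/cnbhdP: wN => [wA'|[a aA ewa]]; first by rewrite wA' in wA.
have aX : a \in X by move: aA; rewrite !inE => /andP [_ ->].
have ax : a != x by move: aA; rewrite !inE => /andP [->].
have wX : w \notin X.
  apply/negP => wX; case: (eqVneq w x) => [wx|wx].
    by apply: (stab stX xX aX); rewrite -wx.
  by move: wA; rewrite !inE wx wX.
have mwX := lemK clX wX aX ewa.
case: (eqVneq (m w) x) => [mwx|mwx].
  exfalso; case: Hx => [nlx|alf].
    have lw : lf w.
      case/orP: (mleaf x) => H; first by rewrite H in nlx.
      by rewrite -mwx mK in H.
    by move: ax; rewrite -mwx -(lfP lw ewa) eqxx.
  have eaw : e a w by rewrite esym.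
  have := lfP (alf a aX) eaw => E.
  by move: ax; rewrite -mwx E mK eqxx.
by apply: cnbhd_self; rewrite in_setD1 mwx mwX.
Qed.

Lemma closed_add (X Y : {set T}) x : closed X -> closed Y -> x \in X ->
  x \notin cnbhd e Y ->
  (lf x \/ forall z, z \in X -> z \notin cnbhd e Y -> ~~ lf z) -> closed (x |: Y).
Proof.
move=> clX clY xX xN Hx; have [stX _] := clX; have [stY clY'] := clY.
have sub : Y \subset x |: Y by apply: subsetUr.
split.
  apply: stableU1 => // y yY; apply/negP => exy.
  by move: xN; rewrite (cnbhd_adj yY exy).
move=> w /cnbhdP [/setU1P [->|wY]|[a /setU1P [->|aY] ewa]].
- by apply: (cnbhd_adj (a:=x)); rewrite ?setU11 // esym.
- by apply: (cnbhd_mono sub); apply: clY'; apply: cnbhd_self.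
- case: (eqVneq w (m x)) => [->|wmx].
    by rewrite mK; apply: cnbhd_self; apply: setU11.
  have nlx : ~~ lf x.
    apply/negP => lx; have exw : e x w by rewrite esym.
    by move: wmx; rewrite (lfP lx exw) eqxx.
  have Hz : forall z, z \in X -> z \notin cnbhd e Y -> ~~ lf z.
    by case: Hx => // H; rewrite H in nlx.
  have wX : w \notin X by apply/negP => wX; apply: (stab stX wX xX ewa).
  have mwX := lemK clX wX xX ewa.
  case: (boolP (m w \in cnbhd e Y)) => mwN.
    exact: (cnbhd_mono sub).
  have := Hz _ mwX mwN => nlmw.
  have lw : lf w by case/orP: (mleaf w) => // H; rewrite H in nlmw.
  by move: wmx; rewrite (lfP lw ewa) mK eqxx.
- by apply: (cnbhd_mono sub); apply: clY'; apply: (cnbhd_adj aY).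
Qed.

Lemma greedoid_m : greedoid (Psi e).
Proof.
split; [|split].
- apply/set0Pn; exists set0; apply: closed_psi; split; first exact: stable0.
  by move=> x /cnbhdP [|[a]]; rewrite inE.
- move=> X /psi_closed clX /set0Pn [x0 x0X].
  case: (boolP [exists x in X, ~~ lf x]) => [/exists_inP [x xX nlx]|H].
    by exists x => //; apply: closed_psi; apply: closed_del => //; left.
  exists x0 => //; apply: closed_psi; apply: closed_del => //; right.
  move=> y yX; apply: contraT => nly; move/exists_inPn: H => /(_ y yX).
  by rewrite nly.
- move=> X Y /psi_closed clX /psi_closed clY cXY.
  have : ~~ (X \subset cnbhd e Y).
    apply/negP => sub; have := card_bound clY (proj1 clX).
    by rewrite (setIidPl sub) cXY ltnn.
  case/subsetPn => z zX zN.
  have YN : forall x, x \notin cnbhd e Y -> x \notin Y.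
    by move=> x; apply: contra; apply: cnbhd_self.
  case: (boolP [exists x in X, (x \notin cnbhd e Y) && lf x]).
    move/exists_inP => [x xX /andP [xN lx]].
    exists x; first by rewrite inE YN.
    by apply: closed_psi; apply: (closed_add clX) => //; left.
  move/exists_inPn => H.
  exists z; first by rewrite inE YN.
  apply: closed_psi; apply: (closed_add clX) => //; right.
  move=> y yX yN; move: (H y yX); by rewrite yN.
Qed.

End S.

Theorem corollary1 (T : finType) (e : rel T) :
  simple_graph e -> very_well_covered e -> girth_ge5 e -> greedoid (Psi e).
Proof.
move=> [esym eirr] [wc [ni cardT]] gir.
have [S0 _ mx0] : exists2 S0 : {set T}, set0 \subset S0 & maxin e setT S0.
  by apply: extend; rewrite ?sub0set ?stable0.
have maxmax : forall S, maxin e setT S -> maximal_stable e S.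
  move=> S mx; apply/andP; split; first exact: maxin_st mx.
  apply/forallP => v; apply/implyP => vS; exact: maxin_max mx (in_setT v) vS.
have wcT : wcU e setT #|S0| by move=> S mx; apply: wc; apply: maxmax.
have aE : alpha e = #|S0|.
  apply/eqP; rewrite eqn_leq; apply/andP; split.
  - apply/bigmax_leqP => S stS; apply: stable_le wcT _ stS; exact: subsetT.
  - exact: (@leq_bigmax_cond _ (fun S => stable e S) (fun S => #|S|) S0 (maxin_st mx0)).
have niT : noisoU e setT.
  by move=> v _; have [u eu] := ni v; exists u; rewrite ?in_setT.
have [_ eqm] := main esym eirr gir (leqnn #|[set: T]|) wcT niT.
have [m Hm] := eqm (ltac:(by rewrite cardsT cardT aE)).
have mE v : e v (m v) by case: (Hm v (in_setT v)).
have mK v : m (m v) = v by case: (Hm v (in_setT v)).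
have mleaf : forall v, lf e m v || lf e m (m v).
  move=> v; case: (boolP (lf e m v)) => //= nlv.
  apply/forallP => y; apply/implyP => emy; rewrite mK; apply: contraT => yv.
  exfalso.
  move/forallPn: nlv => [x]; rewrite negb_imply => /andP [evx xmv].
  have emv : e (m v) v by rewrite esym.
  have eym : e y (m v) by rewrite esym.
  have xy : x != y.
    apply/eqP => E; subst y; case: gir => g3 _; apply: (g3 v x (m v)).
    by split => //; split.
  have nxy : ~~ e x y.
    apply/negP => exy; case: gir => _ g4; apply: (g4 v x y (m v)).
    + by rewrite eq_sym.
    + exact: xmv.
    + by split => //; split => //; split.
  have nyx : ~~ e y x by rewrite esym.
  have st2 : stable e [set x; y].
    apply/stableP => a b; rewrite !inE => /orP [/eqP ->|/eqP ->] /orP [/eqP ->|/eqP ->];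
    by rewrite ?eirr ?nxy ?nyx.
  have [I sub mx] : exists2 I : {set T}, [set x; y] \subset I & maxin e setT I.
    by apply: extend => //; apply: subsetT.
  have xI : x \in I by apply: (subsetP sub); rewrite !inE eqxx.
  have yI : y \in I by apply: (subsetP sub); rewrite !inE eqxx orbT.
  have cI := wcT _ mx.
  have stI := maxin_st mx.
  have vI : v \notin I by apply/negP => vI; apply: (stab stI vI xI evx).
  have mvI : m v \notin I by apply/negP => mvI; apply: (stab stI mvI yI emy).
  have dis : I :&: [set m w | w in I] = set0.
    apply/setP => z; rewrite !inE; apply/negP => /andP [zI /imsetP [w wI E]].
    by apply: (stab stI wI zI); rewrite E.
  have cU : #|I :|: [set m w | w in I]| = #|I| + #|I|.
    have := cardsUI I [set m w | w in I]; rewrite dis cards0 addn0 => ->.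
    by rewrite card_imset //; apply: (can_inj mK).
  have full : I :|: [set m w | w in I] = setT.
    apply/eqP; rewrite eqEcard subsetT /= cU cI cardsT cardT aE.
    by rewrite mul2n addnn.
  have : v \in I :|: [set m w | w in I] by rewrite full in_setT.
  case/setUP => [vI'|/imsetP [w wI E]]; first by rewrite vI' in vI.
  by move: mvI; rewrite E mK wI.
exact: (greedoid_m esym eirr mE mK mleaf).
Qed.
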